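(* Let $n\in\mathbb{N}$, let $\chi$ be a red-blue colouring of $E(K_n)$, and let $P$ be a blue path in $K_n$. Let $Y=[n]\setminus V(P)$ and let $Y_0$ be the set of vertices $y\in Y$ such that no edge between $y$ and a vertex of $V(P)$ is blue. Then $$f(n,\chi)\leq 1+\left\lceil\frac{|Y\setminus Y_0|}{2}\right\rceil+|Y_0|<2+\frac{|Y|}{2}+\frac{|Y_0|}{2}.$$
   Context: $K_n$ is the complete graph on vertex set $[n]=\{1,\dots,n\}$. For a red-blue colouring $\chi$ of $E(K_n)$, $f(n,\chi)$ is the smallest size of a family of monochromatic paths, all of the same colour, whose union covers $[n]$; here paths may have length zero (a single vertex) and need not be disjoint. A blue path is one all of whose edges are blue. *)

(* Defs.v *)
From mathcomp Require Import all_boot all_order all_algebra.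
From Stdlib Require Import ClassicalEpsilon.
Set Implicit Arguments. Unset Strict Implicit. Unset Printing Implicit Defensive.

(* A red-blue colouring of E(K_n) is a
   symmetric function chi : 'I_n -> 'I_n -> bool, where [chi x y] is the colour
   of the edge xy (for x <> y); true = blue, false = red.  Diagonal values are
   irrelevant. *)
Definition blue : bool := true.
Definition red : bool := false.

Definition colouring (n : nat) (chi : 'I_n -> 'I_n -> bool) : Prop :=
  forall x y : 'I_n, chi x y = chi y x.

(* A single vertex is a path of length zero (of every colour). *)
Definition mono_path (n : nat) (chi : 'I_n -> 'I_n -> bool) (c : bool)
  (p : seq 'I_n) : bool :=
  match p with
  | [::] => false
  | x :: s => uniq p && path (fun u v => chi u v == c) x s
  end.

Definition blue_path n chi p := @mono_path n chi blue p.

Definition mono_cover (n : nat) (chi : 'I_n -> 'I_n -> bool) (k : nat) : Prop :=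
  exists (c : bool) (F : seq (seq 'I_n)),
    size F = k /\ all (mono_path chi c) F /\
    forall v : 'I_n, has (fun p => v \in p) F.

Definition mono_coverb n chi k : bool :=
  if excluded_middle_informative (@mono_cover n chi k) then true else false.

Lemma mono_coverb_exists n chi : exists k, @mono_coverb n chi k.
Proof.
exists n; rewrite /mono_coverb.
case: excluded_middle_informative => // H; exfalso; apply: H.
exists blue, [seq [:: v] | v <- enum 'I_n]; split; first by rewrite size_map size_enum_ord.
split; first by apply/allP => p /mapP [v _ ->].
move=> v; apply/hasP; exists [:: v]; last by rewrite inE.
by apply/mapP; exists v; rewrite ?mem_enum.
Qed.

Definition f (n : nat) (chi : 'I_n -> 'I_n -> bool) : nat :=
  ex_minn (@mono_coverb_exists n chi).

(* Main.v *)
Require Import Defs.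
From mathcomp Require Import all_boot all_order all_algebra lra zify.
From Stdlib Require Import ClassicalEpsilon.
Import Order.TTheory GRing.Theory Num.Theory.
Lemma sorted_rev_sym (T : Type) (r : rel T) (s : seq T) :
  symmetric r -> sorted r (rev s) = sorted r s.
Proof.
move=> rs; rewrite rev_sorted; case: s => //= x s; apply: eq_path => u v; exact: rs.
Qed.

Lemma ohead_rev_last (T : Type) (x : T) s : ohead (rev (x :: s)) = Some (last x s).
Proof. by rewrite lastI rev_rcons. Qed.

Lemma seg (T : eqType) (r : rel T) (rs : symmetric r) (p : seq T) :
  uniq p -> sorted r p -> forall x1 x2, x1 \in p -> x2 \in p ->
  exists q, [/\ uniq q, sorted r q, {subset q <= p}, ohead q = Some x1 &
                ohead (rev q) = Some x2].
Proof.
elim: p => [|a p IH] //= /andP [anp up] sp.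
have sp' : sorted r p by exact: path_sorted sp.
have H : forall x, x \in a :: p -> exists q, [/\ uniq q, sorted r q,
    {subset q <= a :: p}, ohead q = Some a & ohead (rev q) = Some x].
  move=> x; rewrite in_cons => /orP [/eqP ->|xp].
    exists [:: a]; split => //= z; rewrite inE => /eqP ->; exact: mem_head.
  case: p anp up sp sp' IH xp => [|b p'] // anp up sp sp' IH xp.
  have [q [uq sq subq hq lq]] := IH up sp' b x (mem_head _ _) xp.
  case: q uq sq subq hq lq => [|b' s] // uq sq subq [eb] lq; subst b'.
  exists [:: a, b & s]; split => //.
  - rewrite cons_uniq uq andbT; apply/negP => /subq ap; by rewrite ap in anp.
  - by move: sp sq => /= /andP [-> _] ->.
  - move=> z; rewrite in_cons => /orP [/eqP ->|/subq zp]; first exact: mem_head.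
    by rewrite in_cons zp orbT.
  - by rewrite rev_cons -cats1 -[b :: s]/(b :: s); move: lq; case: (rev (b :: s)).
move=> x1 x2 h1 h2.
move: (h1); rewrite in_cons => /orP [/eqP ->|x1p]; first exact: H.
move: (h2); rewrite in_cons => /orP [/eqP e2|x2p].
  have [q [uq sq subq hq lq]] := H x1 h1.
  exists (rev q); split => //.
  - by rewrite rev_uniq.
  - by rewrite sorted_rev_sym.
  - by move=> z; rewrite mem_rev; exact: subq.
  - by rewrite revK e2.
have [q [uq sq subq hq lq]] := IH up sp' x1 x2 x1p x2p.
exists q; split => // z /subq zp; by rewrite in_cons zp orbT.
Qed.

Lemma mono_pathE n (chi : 'I_n -> 'I_n -> bool) c q :
  @Defs.mono_path n chi c q = (q != [::]) && uniq q && sorted (fun u v => chi u v == c) q.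
Proof. by case: q. Qed.

Lemma family n (chi : 'I_n -> 'I_n -> bool) (A : pred 'I_n) :
  (forall y1 y2, A y1 -> A y2 -> exists q, [&& @Defs.mono_path n chi blue q, y1 \in q & y2 \in q]) ->
  forall L : seq 'I_n, all A L -> exists F, [/\ size F = uphalf (size L),
     all (@Defs.mono_path n chi blue) F & forall v, v \in L -> has (fun p => v \in p) F].
Proof.
move=> HA L; have [k] := ubnP (size L); elim: k L => [|m IH] L //.
case: L => [|y1 [|y2 L]] sz hA.
- by exists [::].
- exists [:: [:: y1]]; split => // v; rewrite inE => /eqP ->; by rewrite /= mem_head.
- move: hA => /= /and3P [a1 a2 aL].
  have [F [sF aF cF]] := IH L (ltac:(move: sz => /=; lia)) aL.
  have [q /and3P [mq i1 i2]] := HA y1 y2 a1 a2.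
  exists (q :: F); split => /=; first by rewrite sF.
    by rewrite mq.
  move=> v; rewrite !in_cons => /orP [/eqP ->|/orP [/eqP ->|/cF ->]];
    by rewrite ?i1 ?i2 ?orbT.
Qed.

Theorem lemma3p3 (n : nat) (chi : 'I_n -> 'I_n -> bool) (P : seq 'I_n) :
  colouring chi -> blue_path chi P ->
  let VP := [set x : 'I_n | x \in P] in
  let Y := ~: VP in
  let Y0 := [set y in Y | [forall x in VP, chi y x != blue]] in
  (f chi <= 1 + uphalf #|Y :\: Y0| + #|Y0|)%N /\
  ((1 + uphalf #|Y :\: Y0| + #|Y0|)%:R <
     (2 + #|Y|%:R / 2 + #|Y0|%:R / 2 : rat))%R.
Proof.
move=> Hc HP VP Y Y0; split; last first.
  have hY : #|Y| = (#|Y :\: Y0| + #|Y0|)%N.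
    rewrite -(cardsID Y0 Y) addnC (setIidPr _) //.
    by apply/subsetP => y; rewrite inE => /andP [].
  have h2 : ((uphalf #|Y :\: Y0|).*2 <= #|Y :\: Y0|.+1)%N.
    by rewrite uphalfK; case: odd.
  move: h2; rewrite hY -muln2 -(ler_nat rat) !natrD !natrM => h2.
  lra.
pose r := fun u v : 'I_n => chi u v == blue.
have rs : symmetric r by move=> u v; rewrite /r Hc.
have [uP sP] : uniq P /\ sorted r P.
  by move: HP; rewrite /blue_path mono_pathE => /andP [/andP [_ ->] ->].
pose A := fun y => y \in Y :\: Y0.
have nb : forall y, A y -> y \notin P /\ exists2 x, x \in P & r y x.
  move=> y; rewrite /A !inE => /andP [h yP]; rewrite yP /= in h; split => //.
  move: h => /forallPn [x]; rewrite negb_imply negbK inE => /andP [xP rx]; by exists x.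
have nq : forall y, y \notin P -> forall q : seq 'I_n, {subset q <= P} -> y \notin q.
  by move=> y yP q sub; apply/negP => /sub h; rewrite h in yP.
have HA : forall y1 y2, A y1 -> A y2 ->
    exists q, [&& Defs.mono_path chi blue q, y1 \in q & y2 \in q].
  move=> y1 y2 a1 a2.
  have [e|ne] := eqVneq y1 y2.
    by subst; exists [:: y2]; rewrite /= mem_head.
  have [n1 [x1 x1P r1]] := nb _ a1.
  have [n2 [x2 x2P r2]] := nb _ a2.
  have [q [uq sq subq hq lq]] := seg _ _ rs _ uP sP _ _ x1P x2P.
  case: q uq sq subq hq lq => [|x s] // uq sq subq [ex] lq; subst x.
  move: lq; rewrite ohead_rev_last => [[lq]].
  exists (y1 :: (x1 :: s) ++ [:: y2]).
  have y2q : y2 \in y1 :: (x1 :: s) ++ [:: y2] by rewrite in_cons mem_cat mem_seq1 eqxx !orbT.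
  have U : uniq (y1 :: (x1 :: s) ++ [:: y2]).
    rewrite cons_uniq cat_uniq uq mem_cat negb_or mem_seq1 ne (nq _ n1 _ subq) /=.
    by rewrite orbF (nq _ n2 _ subq).
  have S : path r y1 ((x1 :: s) ++ [:: y2]).
    move: sq => /= sq; rewrite cat_path /= r1 sq lq /= andbT rs; exact: r2.
  rewrite y2q mem_head !andbT /Defs.mono_path; by apply/andP; split.
have [F [sF aF cF]] := family _ _ _ HA (enum (Y :\: Y0))
  (ltac:(by apply/allP => y; rewrite mem_enum)).
rewrite cardE -sF.
rewrite /f; case: ex_minnP => m _ Hmin; apply: Hmin.
rewrite /mono_coverb; case: excluded_middle_informative => // [[]].
exists blue, (P :: F ++ [seq [:: v] | v <- enum Y0]); split.
  rewrite /= size_cat size_map -cardE; reflexivity.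
split.
  rewrite /= all_cat aF /=; apply/andP; split; first exact: HP.
  by apply/allP => p /mapP [v _ ->].
move=> v; case vP: (v \in P); first by rewrite /= vP.
rewrite /= vP /= has_cat; case vY0: (v \in Y0).
  apply/orP; right; apply/hasP; exists [:: v]; last exact: mem_head.
  by apply/mapP; exists v; rewrite ?mem_enum.
rewrite cF //; by rewrite mem_enum in_setD vY0 !inE vP.
Qed.
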